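(* Let $n\ge2$, let $X\subset\mathbb{R}^n$ be finite with the Euclidean metric $d$, let $k\in\mathbb{N}$, and fix an increasing sequence $0=\epsilon_0<\epsilon_1<\epsilon_2<\cdots$. For any $i\in\mathbb{N}$, any $\nu$ with $\epsilon_{i-1}<\nu\le\epsilon_i$, any $\alpha\ge0$ and any $p\ne q\in X$: \[ p,q \text{ lie in the same connected component of } H(i)_\nu \iff p,q \text{ lie in the same connected component of } G(X,\rho^X)_\nu, \] and \[ p,q \text{ lie in the same connected component of } \mathcal{F}(i)_\alpha \iff p,q \text{ lie in the same connected component of } G(X,\rho^X)_\alpha. \]
   Context: DBSCAN$^*$: for $Y\subset X$ and $\epsilon>0$, $\mathcal{C}(Y,\epsilon)=\{p\in Y:|\{y\in Y:d(p,y)\le\epsilon\}|>k\}$, $\mathcal{N}(Y,\epsilon)=Y\setminus\mathcal{C}(Y,\epsilon)$, and $\mathcal{D}^*(Y,\epsilon)$ is the set of vertex sets of the connected components of the graph with vertex set $\mathcal{C}(Y,\epsilon)$ and an edge between distinct $p,q$ whenever $d(p,q)\le\epsilon$. For $Z\subset X$ and $p\in Z$, $\operatorname{core}^Z_k(p)$ is the distance from $p$ to a $k$-th nearest neighbour of $p$ in $Z$ (the $k$-th smallest value of $d(p,z)$, $z\in Z\setminus\{p\}$, with multiplicity) and $\rho^Z(p,q)=\max\{\operatorname{core}^Z_k(p),\operatorname{core}^Z_k(q),d(p,q)\}$ for $p\ne q$, $\rho^Z(p,p)=0$. Cubes (for a given $\epsilon>0$): $\mathcal{Q}(\epsilon)$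 is the collection of closed cubes $\{x\in\mathbb{R}^n: j_i\frac{\epsilon}{2\sqrt n}\le x_i\le (j_i+1)\frac{\epsilon}{2\sqrt n}\}$, $j\in\mathbb{Z}^n$; $S^m=\{x:\max_i|x_i-s_i|\le m\frac{\epsilon}{2\sqrt n}\text{ for some }s\in S\}$; $\mathcal{I}(B)=\{S\in\mathcal{Q}(\epsilon):S\cap B\ne\emptyset\}$. For $A\subset X$, $S\in\mathcal{I}(A)$ is an interior cube of $A$ if $S^1\cap X\subset A$ and every $T\in\mathcal{Q}(\epsilon)$ with $T\subset S^1$ lies in $\mathcal{I}(A)$, otherwise a boundary cube; $\partial A$ is the union of boundary cubes. For $Z\subset\mathbb{R}^n$, integer $N\ge0$: $Z^N=\bigcup_{S\in\mathcal{I}(Z)}S^N$, $Z^N_C=Z^N\cap C$. $\mathfrak{n},\mathfrak{m}$ are the smallest integers with $\mathfrak{n}\ge\sqrt n-1$, $\mathfrak{m}\ge2\sqrt n$; $\mathfrak{N}=\mathfrak{n}+\mathfrak{m}$. $F(Y,\epsilon)=\bigcup_{C\in\mathcal{D}^*(Y,\epsilon)}(\partial C)^{\mathfrak{N}}_C\cup\mathcal{N}(Y,\epsilon)$, cubes in $\mathcal{Q}(\epsilon)$. Graphs: $G(Z,w)$ is the complete weighted graph on finite $Z$ with weights $w(p,q)$; for a weighted graph $G$ and $\alpha\ge0$, $G_\alpha$ has the same vertex set and only the edges of weight $\le\alpha$. The union $G\cup H$ of weighted graphs has vertex set $V(G)\cup V(H)$, edge set $E(G)\cup E(H)$, and weight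 on a common edge the minimum of the two weights. Construction: $X_1=X$, $X_{i+1}=F(X_i,\epsilon_i)$ for $i\ge1$; $H(0)$ is the graph on $X_1$ with no edges; for $i\ge0$, $H(i+1)=\bigcup_{C\in\mathcal{D}^*(X_{i+1},\epsilon_{i+1})}G\big(B_{\epsilon_{i+1}}(C),\rho^{B_{\epsilon_{i+1}}(C)}\big)_{\epsilon_{i+1}}\cup H(i)$, where $B_{\epsilon_{i+1}}(C)=\{y\in X_{i+1}: d(y,C)\le\epsilon_{i+1}\}$. Finally $\mathcal{F}(i)=G(X_{i+1},\rho^{X_{i+1}})\cup H(i)$. *)

(* Defs.v *)
From HB Require Import structures.
From mathcomp Require Import all_boot all_order all_algebra.
From mathcomp Require Import finmap.
From mathcomp Require Import boolp reals.
Set Implicit Arguments. Unset Strict Implicit. Unset Printing Implicit Defensive.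
Import Order.TTheory GRing.Theory Num.Theory.
Local Open Scope ring_scope.
Local Open Scope fset_scope.

Section DBSCAN.
Variables (R : realType) (n : nat).

Definition pt := 'rV[R]_n.

Definition dist (p q : pt) : R := Num.sqrt (\sum_(i < n) (p ord0 i - q ord0 i) ^+ 2).

Section Dbscan.
Variable k : nat.

Definition coreset (Y : {fset pt}) (eps : R) : {fset pt} :=
  [fset p in Y | (k < #|` [fset y in Y | (dist p y <= eps)%R]|)%N].

Definition noise (Y : {fset pt}) (eps : R) : {fset pt} := Y `\` coreset Y eps.

Definition reachC (Y : {fset pt}) (eps : R) (p q : pt) : Prop :=
  exists s : seq pt,
    path (fun x y => [&& x \in coreset Y eps, y \in coreset Y eps & (dist x y <= eps)%R]) p s
    /\ last p s = q.

Definition compC (Y : {fset pt}) (eps : R) (p : pt) : {fset pt} :=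
  [fset q in coreset Y eps | `[< reachC Y eps p q >]].

Definition Dstar (Y : {fset pt}) (eps : R) : {fset {fset pt}} :=
  [fset compC Y eps p | p in coreset Y eps].

(* core_k^Z(p): the k-th smallest value of d(p,z), z in Z\{p}, with multiplicity.
   core_0 = 0 (p is its own 0-th neighbour); None (= +infinity) when Z\{p} has
   fewer than k points. *)
Definition coredist (Z : {fset pt}) (p : pt) : option R :=
  if k == 0%N then Some 0 else
  let l := sort <=%R [seq dist p z | z <- enum_fset Z & z != p] in
  if (k <= size l)%N then Some (nth 0 l k.-1) else None.

(* rho^Z ; None means the weight is undefined (+infinity, no edge) *)
Definition rho (Z : {fset pt}) (p q : pt) : option R :=
  if p == q then Some 0 else
  match coredist Z p, coredist Z q with
  | Some a, Some b => Some (Num.max a (Num.max b (dist p q)))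
  | _, _ => None
  end.
End Dbscan.

Section Cubes.
Variable eps : R.

Definition side : R := eps / (2 * Num.sqrt (n%:R)).

Definition cube (j : 'I_n -> int) (x : pt) : Prop :=
  forall i : 'I_n, (j i)%:~R * side <= x ord0 i <= (j i + 1)%:~R * side.

Definition cubeN (j : 'I_n -> int) (m : int) (x : pt) : Prop :=
  exists s, cube j s /\ forall i : 'I_n, `|x ord0 i - s ord0 i| <= m%:~R * side.

Definition meets (B : pt -> Prop) (j : 'I_n -> int) : Prop :=
  exists x, B x /\ cube j x.

Definition interior_cube (X A : {fset pt}) (j : 'I_n -> int) : Prop :=
  meets (fun x => x \in A) j /\
  (forall x, x \in X -> cubeN j 1 x -> x \in A) /\
  (forall j' : 'I_n -> int, (forall x, cube j' x -> cubeN j 1 x) ->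
       meets (fun x => x \in A) j').

Definition boundary_cube (X A : {fset pt}) (j : 'I_n -> int) : Prop :=
  meets (fun x => x \in A) j /\ ~ interior_cube X A j.

Definition bdry (X A : {fset pt}) (x : pt) : Prop :=
  exists j, boundary_cube X A j /\ cube j x.

Definition thicken (Z : pt -> Prop) (N : int) (x : pt) : Prop :=
  exists j, meets Z j /\ cubeN j N x.
End Cubes.

Definition frakn : int := Num.ceil (Num.sqrt (n%:R : R) - 1).
Definition frakm : int := Num.ceil (2 * Num.sqrt (n%:R : R)).
Definition frakN : int := frakn + frakm.

Definition Fset (k : nat) (X Y : {fset pt}) (eps : R) : {fset pt} :=
  [fset p in Y | `[< (exists C, C \in Dstar k Y eps /\ p \in C /\
                         thicken eps (bdry eps X C) frakN p)
                     \/ p \in noise k Y eps >]].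

(* W x y = Some w : edge {x,y} of weight w ; None : no edge *)
Record wgraph := WGraph { gV : {fset pt}; gW : pt -> pt -> option R }.

Definition omin (a b : option R) : option R :=
  match a, b with
  | Some x, Some y => Some (Num.min x y)
  | Some x, None => Some x
  | None, b => b
  end.

Definition gcomplete (Z : {fset pt}) (w : pt -> pt -> option R) : wgraph :=
  WGraph Z (fun p q => if [&& p \in Z, q \in Z & p != q] then w p q else None).

Definition gtrunc (alpha : R) (G : wgraph) : wgraph :=
  WGraph (gV G) (fun p q => match gW G p q with
                            | Some w => if w <= alpha then Some w else None
                            | None => None end).

Definition gunion (G H : wgraph) : wgraph :=
  WGraph (gV G `|` gV H) (fun p q => omin (gW G p q) (gW H p q)).

Definition gempty : wgraph := WGraph fset0 (fun _ _ => None).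

Definition gbigunion (s : seq wgraph) : wgraph := foldr gunion gempty s.

Definition gconn (G : wgraph) (p q : pt) : Prop :=
  p \in gV G /\ q \in gV G /\
  exists s : seq pt, path (fun x y => gW G x y != None) p s /\ last p s = q.

Section Construction.
Variables (k : nat) (X : {fset pt}) (e : nat -> R).

(* Xs m = X_{m+1} *)
Fixpoint Xs (m : nat) : {fset pt} :=
  match m with
  | 0 => X
  | m'.+1 => Fset k X (Xs m') (e m'.+1)
  end.

Definition Ball (Y : {fset pt}) (eps : R) (C : {fset pt}) : {fset pt} :=
  [fset y in Y | `[< exists c, c \in C /\ (dist y c <= eps)%R >]].

Fixpoint Hg (m : nat) : wgraph :=
  match m with
  | 0 => WGraph X (fun _ _ => None)
  | m'.+1 =>
      gunion
        (gbigunion [seq gtrunc (e m'.+1)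
                       (gcomplete (Ball (Xs m') (e m'.+1) C)
                                  (rho k (Ball (Xs m') (e m'.+1) C)))
                   | C <- enum_fset (Dstar k (Xs m') (e m'.+1))])
        (Hg m')
  end.

Definition Fg (i : nat) : wgraph := gunion (gcomplete (Xs i) (rho k (Xs i))) (Hg i).
End Construction.
End DBSCAN.

(* Main.v *)
Require Import Defs.
From HB Require Import structures.
From mathcomp Require Import all_boot all_order all_algebra.
From mathcomp Require Import finmap.
From mathcomp Require Import boolp reals.
From mathcomp Require Import ring lra zify.
Set Implicit Arguments. Unset Strict Implicit. Unset Printing Implicit Defensive.
Import Order.TTheory GRing.Theory Num.Theory.
Local Open Scope fset_scope.
Local Open Scope ring_scope.

Section Dist.
Variables (R : realType) (n : nat).
Local Notation pt := (pt R n).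
Local Notation dist := (@dist R n).

Lemma CS (a b : 'I_n -> R) :
  (\sum_i a i * b i) ^+ 2 <= (\sum_i a i ^+ 2) * (\sum_i b i ^+ 2).
Proof.
have H : 0 <= \sum_i \sum_j (a i * b j - a j * b i) ^+ 2.
  by apply: sumr_ge0 => i _; apply: sumr_ge0 => j _; exact: sqr_ge0.
have E : \sum_i \sum_j (a i * b j - a j * b i) ^+ 2 =
   2%:R * ((\sum_i a i ^+ 2) * (\sum_i b i ^+ 2) - (\sum_i a i * b i) ^+ 2).
  have E1 : forall i j, (a i * b j - a j * b i) ^+ 2 =
     a i ^+ 2 * b j ^+ 2 + a j ^+ 2 * b i ^+ 2 - 2%:R * ((a i * b i) * (a j * b j)).
    by move=> i j; ring.
  have E2 : forall i, \sum_j (a i * b j - a j * b i) ^+ 2 =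
     a i ^+ 2 * (\sum_j b j ^+ 2) + b i ^+ 2 * (\sum_j a j ^+ 2)
       - 2%:R * (a i * b i) * (\sum_j a j * b j).
    move=> i; rewrite (eq_bigr _ (fun j _ => E1 i j)) sumrB big_split /=.
    rewrite !mulr_sumr; congr (_ + _ - _); apply: eq_bigr => j _; ring.
  rewrite (eq_bigr _ (fun i _ => E2 i)) sumrB big_split /=.
  rewrite -!mulr_suml.
  rewrite -mulr_sumr; ring.
rewrite E in H.
have : 0 <= (\sum_i a i ^+ 2) * (\sum_i b i ^+ 2) - (\sum_i a i * b i) ^+ 2.
  by rewrite -(@pmulr_rge0 _ 2%:R) //.
by rewrite subr_ge0.
Qed.

Definition d2 (p q : pt) := \sum_(i < n) (p ord0 i - q ord0 i) ^+ 2.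
Lemma distE p q : dist p q = Num.sqrt (d2 p q). Proof. by []. Qed.
Lemma d2_ge0 p q : 0 <= d2 p q.
Proof. by apply: sumr_ge0 => i _; exact: sqr_ge0. Qed.
Lemma dist_ge0 p q : 0 <= dist p q. Proof. exact: sqrtr_ge0. Qed.
Lemma distC p q : dist p q = dist q p.
Proof. by rewrite !distE /d2; congr Num.sqrt; apply: eq_bigr => i _; rewrite -sqrrN opprB. Qed.
Lemma dist_xx p : dist p p = 0.
Proof. by rewrite distE /d2 big1 ?sqrtr0 // => i _; rewrite subrr expr0n. Qed.

Lemma sum_le_sqrt (a b : 'I_n -> R) :
  \sum_i a i * b i <= Num.sqrt (\sum_i a i ^+ 2) * Num.sqrt (\sum_i b i ^+ 2).
Proof.
have hA : 0 <= \sum_i a i ^+ 2 by apply: sumr_ge0 => i _; exact: sqr_ge0.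
have hB : 0 <= \sum_i b i ^+ 2 by apply: sumr_ge0 => i _; exact: sqr_ge0.
case: (lerP (\sum_i a i * b i) 0) => h.
  apply: le_trans h _; exact: mulr_ge0 (sqrtr_ge0 _) (sqrtr_ge0 _).
rewrite -sqrtrM // -(ger0_norm (ltW h)) -sqrtr_sqr ler_wsqrtr //; exact: CS.
Qed.

Lemma dist_tri p q r : dist p r <= dist p q + dist q r.
Proof.
rewrite !distE /d2.
set a := fun i : 'I_n => p ord0 i - q ord0 i.
set b := fun i : 'I_n => q ord0 i - r ord0 i.
have -> : \sum_(i < n) (p ord0 i - r ord0 i) ^+ 2 =
   \sum_i a i ^+ 2 + 2%:R * \sum_i a i * b i + \sum_i b i ^+ 2.
  rewrite mulr_sumr -!big_split /=; apply: eq_bigr => i _; rewrite /a /b; ring.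
have hA : 0 <= \sum_i a i ^+ 2 by apply: sumr_ge0 => i _; exact: sqr_ge0.
have hB : 0 <= \sum_i b i ^+ 2 by apply: sumr_ge0 => i _; exact: sqr_ge0.
have H := sum_le_sqrt a b.
have hs : 0 <= Num.sqrt (\sum_i a i ^+ 2) + Num.sqrt (\sum_i b i ^+ 2).
  by apply: addr_ge0; exact: sqrtr_ge0.
rewrite -(ger0_norm hs) -sqrtr_sqr ler_wsqrtr //.
rewrite sqrrD !sqr_sqrtr //.
have : 2%:R * \sum_i a i * b i <=
   Num.sqrt (\sum_i a i ^+ 2) * Num.sqrt (\sum_i b i ^+ 2) *+ 2.
  by rewrite mulr2n -mulr2n mulr_natl lerMn2r /=.
lra.
Qed.

Lemma coord_le_dist (p q : pt) (i : 'I_n) : `|p ord0 i - q ord0 i| <= dist p q.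
Proof.
rewrite distE -sqrtr_sqr ler_wsqrtr // /d2 (bigD1 i) //= lerDl.
by apply: sumr_ge0 => j _; exact: sqr_ge0.
Qed.

Lemma dist_le0 (p q : pt) : dist p q <= 0 -> p = q.
Proof.
move=> h; apply/rowP => i.
have := coord_le_dist p q i.
have := normr_ge0 (p ord0 i - q ord0 i).
move=> h1 h2.
have : `|p ord0 i - q ord0 i| = 0 by apply/eqP; rewrite eq_le h1 andbT; exact: le_trans h2 h.
by move/eqP; rewrite normr_eq0 subr_eq0 => /eqP.
Qed.

Lemma dist_box (p q : pt) (s : R) : 0 <= s -> (forall i, `|p ord0 i - q ord0 i| <= s) ->
  dist p q <= s * Num.sqrt n%:R.
Proof.
move=> s0 h; rewrite distE -(ger0_norm s0) -sqrtr_sqr -sqrtrM ?sqr_ge0 //.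
apply: ler_wsqrtr; rewrite /d2.
have -> : s ^+ 2 * n%:R = \sum_(i < n) s ^+ 2.
  by rewrite sumr_const card_ord mulr_natr.
apply: ler_sum => i _.
rewrite -[(p ord0 i - q ord0 i) ^+ 2]real_normK ?num_real //.
rewrite lerXn2r // ?nnegrE ?normr_ge0 //; exact: h.
Qed.
Lemma dist_scale (a b u v : pt) (c : R) : 0 <= c ->
  (forall i, a ord0 i - b ord0 i = c * (u ord0 i - v ord0 i)) ->
  dist a b = c * dist u v.
Proof.
move=> c0 h; rewrite !distE /d2 -(ger0_norm c0) -sqrtr_sqr -sqrtrM ?sqr_ge0 //.
by congr Num.sqrt; rewrite mulr_sumr; apply: eq_bigr => i _; rewrite h exprMn.
Qed.

Definition seg (p q : pt) (l : R) : pt := p + l *: (q - p).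
Lemma seg_coord p q l i : seg p q l ord0 i = p ord0 i + l * (q ord0 i - p ord0 i).
Proof. by rewrite /seg !mxE. Qed.
Lemma dist_seg1 p q l : 0 <= l -> dist p (seg p q l) = l * dist p q.
Proof.
move=> l0; rewrite distC [dist p q]distC; apply: dist_scale => // i.
rewrite seg_coord; ring.
Qed.
Lemma dist_seg2 p q l : l <= 1 -> dist (seg p q l) q = (1 - l) * dist p q.
Proof.
move=> l1; apply: dist_scale; first by lra.
move=> i; rewrite seg_coord; ring.
Qed.
End Dist.

Section Sorted.
Variable R : realType.
Lemma sorted_nth_le (l : seq R) (v : R) : sorted <=%R l ->
  forall j, (j < size l)%N -> (nth 0 l j <= v) = (j < count (fun x : R => (x <= v)%R) l)%N.
Proof.
elim: l => [|x l IH] //= Hs j Hj.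
have Hl : sorted <=%R l by exact: path_sorted Hs.
have Hall : all (fun y => x <= y) l by apply: order_path_min => //; exact: le_trans.
have hc : ~~ (x <= v) -> count (fun x0 : R => (x0 <= v)%R) l = 0%N.
  move=> hx; apply/eqP; rewrite -leqn0 leqNgt -has_count; apply/hasP => -[y yl hy].
  move/allP: Hall => /(_ y yl) hxy.
  by move: (le_trans hxy hy); rewrite (negbTE hx).
case: j Hj => [|j] Hj /=.
  by case hx: (x <= v) => //=; rewrite hc ?hx.
rewrite IH //; case hx: (x <= v) => //=.
by rewrite (hc (negbT hx)).
Qed.
End Sorted.

Section Core.
Variables (R : realType) (n : nat) (k : nat).
Local Notation pt := (pt R n).
Local Notation dist := (@dist R n).

Definition cnt (Z : {fset pt}) (p : pt) (v : R) : nat :=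
  #|` [fset z in Z | (z != p) && (dist p z <= v)] |.

Lemma card_sep (Z : {fset pt}) (P : pred pt) :
  #|` [fset z in Z | P z] | = count P (enum_fset Z).
Proof.
have -> : [fset z in Z | P z] = [fset x in [seq z <- enum_fset Z | P z]].
  by apply/fsetP => x; rewrite !inE mem_filter andbC.
rewrite card_fseq undup_id ?size_filter //; apply: filter_uniq; exact: fset_uniq.
Qed.

Lemma coredist_leP (Z : {fset pt}) p v : 0 <= v ->
  (exists2 a, coredist k Z p = Some a & a <= v) <-> (k <= cnt Z p v)%N.
Proof.
move=> v0; rewrite /coredist.
case: eqP => [->|/eqP k0]; first by split => // _; exists 0.
set l0 := [seq dist p z | z <- enum_fset Z & z != p].
have Hc : cnt Z p v = count (fun x : R => (x <= v)%R) (sort <=%R l0).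
  rewrite /cnt card_sep (permP (permEl (perm_sort _ _))) /l0 count_map count_filter.
  by apply: eq_count => z /=; rewrite andbC.
rewrite Hc /=.
have Hs : sorted <=%R (sort <=%R l0) by apply: sort_sorted; exact: le_total.
have Hsz : (count (fun x : R => (x <= v)%R) (sort <=%R l0) <= size (sort <=%R l0))%N.
  exact: count_size.
have [k' ek] : exists k', k = k'.+1 by exists k.-1; rewrite prednK // lt0n.
rewrite ek /=.
case: ifP => hk.
- split; first by move=> [a [<-]]; rewrite (sorted_nth_le v Hs hk).
  by move=> h; exists (nth 0 (sort <=%R l0) k') => //; rewrite (sorted_nth_le v Hs hk).
- split; first by move=> [a].
  by move=> h; move: (leq_trans h Hsz); rewrite hk.
Qed.

Lemma cnt_sub (Z Z' : {fset pt}) p v v' : Z' `<=` Z -> v' <= v -> (cnt Z' p v' <= cnt Z p v)%N.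
Proof.
move=> hZ hv; apply: fsubset_leq_card; apply/fsubsetP => x; rewrite !inE.
move=> /and3P[xZ -> h] /=.
rewrite (fsubsetP hZ _ xZ) /=; exact: le_trans h hv.
Qed.
End Core.

Section Graph.
Variables (R : realType) (n : nat).
Local Notation pt := (pt R n).
Local Notation dist := (@dist R n).
Local Notation wgraph := (wgraph R n).

Inductive conn (e : pt -> pt -> Prop) : pt -> pt -> Prop :=
| conn0 p : conn e p p
| connS p q r : e p q -> conn e q r -> conn e p r.

Lemma conn1 (e : pt -> pt -> Prop) p q : e p q -> conn e p q.
Proof. by move=> h; apply: connS h (conn0 _ _). Qed.

Lemma conn_trans (e : pt -> pt -> Prop) p q r : conn e p q -> conn e q r -> conn e p r.
Proof. by elim=> // x y z h _ IH /IH; apply: connS. Qed.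

Lemma conn_mono (e e' : pt -> pt -> Prop) : (forall x y, e x y -> conn e' x y) ->
  forall p q, conn e p q -> conn e' p q.
Proof. move=> h p q; elim=> [x|x y z /h hxy _ IH]; [exact: conn0|exact: conn_trans hxy IH]. Qed.

Lemma conn_sym (e : pt -> pt -> Prop) : (forall x y, e x y -> e y x) ->
  forall p q, conn e p q -> conn e q p.
Proof.
move=> hs p q; elim=> [x|x y z hxy _ IH]; first exact: conn0.
apply: conn_trans IH _; exact/conn1/hs.
Qed.

Lemma path_connP (r : rel pt) p q :
  (exists s, path r p s /\ last p s = q) <-> conn r p q.
Proof.
split.
  move=> [s []]; elim: s p => [|x s IH] p /=; first by move=> _ ->; exact: conn0.
  by move=> /andP[h1 h2] h3; apply: connS h1 (IH _ h2 h3).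
elim=> [x|x y z h _ [s [h1 h2]]]; first by exists [::].
by exists (y :: s) => /=; rewrite h h1.
Qed.

Definition edge (G : wgraph) (v : R) (p q : pt) : Prop :=
  exists2 w, gW G p q = Some w & w <= v.

Lemma gconnE (G : wgraph) v p q :
  gconn (gtrunc v G) p q <-> [/\ p \in gV G, q \in gV G & conn (edge G v) p q].
Proof.
have E : forall x y, (gW (gtrunc v G) x y != None) <-> edge G v x y.
  move=> x y /=; rewrite /edge; case: (gW G x y) => [w|] /=.
    by case: ifP => h; split => //; [exists w|case=> w' [<-]; rewrite h].
  by split => //; case.
rewrite /gconn /=; split.
  move=> [hp [hq /path_connP h]]; split => //.
  by apply: conn_mono h => x y /E; apply: conn1.
move=> [hp hq h]; split => //; split => //; apply/path_connP.
by apply: conn_mono h => x y /E h'; apply: conn1.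
Qed.

Lemma edge_trunc (G : wgraph) a v p q :
  edge (gtrunc a G) v p q <-> (exists2 w, gW G p q = Some w & (w <= a) && (w <= v)).
Proof.
rewrite /edge /=; case: (gW G p q) => [w|].
  case: ifP => h; split.
  - by move=> [w' [<-] hv]; exists w => //; rewrite h.
  - by move=> [w' [<-] /andP[_ hv]]; exists w.
  - by case.
  - by move=> [w' [<-]]; rewrite h.
by split; case.
Qed.

Lemma edge_union (G H : wgraph) v p q :
  edge (gunion G H) v p q <-> edge G v p q \/ edge H v p q.
Proof.
rewrite /edge /= /omin; case: (gW G p q) => [a|]; case: (gW H p q) => [b|].
- split.
  + move=> [w [<-]]; rewrite ge_min => /orP[h|h]; [left; exists a|right; exists b] => //.
  + by move=> [[w [<-] h]|[w [<-] h]]; exists (Num.min a b) => //; rewrite ge_min h ?orbT.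
- split; first by move=> [w [<-] h]; left; exists a.
  by move=> [[w [<-] h]|[w]] //; exists a.
- split; first by move=> [w [<-] h]; right; exists b.
  by move=> [[w]|[w [<-] h]] //; exists b.
- by split; [case|case; case].
Qed.

Lemma edge_bigunion (f : {fset pt} -> wgraph) (s : seq {fset pt}) v p q :
  edge (gbigunion [seq f C | C <- s]) v p q <-> exists2 C, C \in s & edge (f C) v p q.
Proof.
elim: s => [|C s IH] /=.
  by split; [case|case].
rewrite edge_union IH; split.
  by move=> [h|[C' h1 h2]]; [exists C; rewrite ?mem_head|exists C'; rewrite ?inE ?h1 ?orbT].
move=> [C' ]; rewrite inE => /orP[/eqP ->|h1] h2; first by left.
by right; exists C'.
Qed.

Lemma edge_complete (Z : {fset pt}) w v p q :
  edge (gcomplete Z w) v p q <-> [/\ p \in Z, q \in Z, p != q & exists2 a, w p q = Some a & a <= v].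
Proof.
rewrite /edge /=; case: ifP => [/and3P[h1 h2 h3]|h].
  by split; [move=> h4; split|case].
split; first by case.
by case=> h1 h2 h3; rewrite h1 h2 h3 in h.
Qed.

Lemma gV_Hg k (X : {fset pt}) (e : nat -> R) m : X `<=` gV (Hg k X e m).
Proof.
elim: m => [|m IH] /=; first exact: fsubset_refl.
by apply: fsubset_trans IH _; apply: fsubsetUr.
Qed.
End Graph.

Section Edges.
Variables (R : realType) (n : nat) (k : nat).
Local Notation pt := (pt R n).
Local Notation dist := (@dist R n).

Definition E (Z : {fset pt}) (v : R) (p q : pt) : Prop :=
  [/\ p \in Z, q \in Z & p != q] /\ [/\ (k <= cnt Z p v)%N, (k <= cnt Z q v)%N & dist p q <= v].

Lemma rho_leP (Z : {fset pt}) p q v : p != q -> 0 <= v ->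
  (exists2 a, rho k Z p q = Some a & a <= v) <->
  [/\ (k <= cnt Z p v)%N, (k <= cnt Z q v)%N & dist p q <= v].
Proof.
move=> pq v0; rewrite /rho (negbTE pq).
have Hp := coredist_leP k Z p v0; have Hq := coredist_leP k Z q v0.
case Ep: (coredist k Z p) Hp => [a|] Hp; case Eq: (coredist k Z q) Hq => [b|] Hq.
- split.
    move=> [w [<-]]; rewrite !ge_max => /and3P[h1 h2 h3].
    by split => //; [apply/Hp; exists a|apply/Hq; exists b].
  move=> [/Hp[a' [<-] h1] /Hq[b' [<-] h2] h3].
  by exists (Num.max a (Num.max b (dist p q))) => //; rewrite !ge_max h1 h2 h3.
- split; first by case.
  by move=> [_ /Hq[]].
- split; first by case.
  by move=> [/Hp[]].
- split; first by case.
  by move=> [/Hp[]].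
Qed.

Lemma edge_rho (Z : {fset pt}) v p q : 0 <= v ->
  edge (gcomplete Z (rho k Z)) v p q <-> E Z v p q.
Proof.
move=> v0; rewrite edge_complete; split.
  by move=> [h1 h2 h3 /(rho_leP _ h3 v0) [h4 h5 h6]]; split; split.
by move=> [[h1 h2 h3] [h4 h5 h6]]; split => //; apply/(rho_leP _ h3 v0); split.
Qed.

Lemma edge_trho (Z : {fset pt}) a v p q : 0 <= a -> 0 <= v ->
  edge (gtrunc a (gcomplete Z (rho k Z))) v p q <-> E Z (Num.min a v) p q.
Proof.
move=> a0 v0.
have m0 : 0 <= Num.min a v by rewrite le_min a0 v0.
rewrite edge_trunc -edge_rho //; split.
  by move=> [w h1 h2]; exists w => //; rewrite le_min.
by move=> [w h1 h2]; exists w => //; rewrite -le_min.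
Qed.

Variables (X : {fset pt}) (e : nat -> R).

Lemma Hg0_edge v p q : ~ edge (Hg k X e 0) v p q.
Proof. by case. Qed.

Lemma Hg_edge m v p q : 0 <= v -> 0 <= e m.+1 ->
  edge (Hg k X e m.+1) v p q <->
  (exists2 C, C \in Dstar k (Xs k X e m) (e m.+1) &
      E (Ball (Xs k X e m) (e m.+1) C) (Num.min (e m.+1) v) p q)
  \/ edge (Hg k X e m) v p q.
Proof.
move=> v0 e0 /=; rewrite edge_union.
rewrite (edge_bigunion (fun C => gtrunc (e m.+1) (gcomplete (Ball (Xs k X e m) (e m.+1) C)
                         (rho k (Ball (Xs k X e m) (e m.+1) C))))).
split; move=> [[C h1 h2]|h]; (try by right); left; exists C => //.
- by apply/edge_trho.
- by apply/edge_trho.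
Qed.

Lemma Fg_edge i v p q : 0 <= v ->
  edge (Fg k X e i) v p q <-> E (Xs k X e i) v p q \/ edge (Hg k X e i) v p q.
Proof. by move=> v0; rewrite /Fg edge_union edge_rho. Qed.
End Edges.

Section Struct.
Variables (R : realType) (n : nat) (k : nat).
Local Notation pt := (pt R n).
Local Notation dist := (@dist R n).

Lemma in_sep (A : {fset pt}) (P : pred pt) x : (x \in [fset y in A | P y]) = (x \in A) && P x.
Proof. by rewrite inE. Qed.

Lemma cnt_incl (Y Z : {fset pt}) p v :
  (forall z, z \in Y -> z != p -> dist p z <= v -> z \in Z) -> (cnt Y p v <= cnt Z p v)%N.
Proof.
move=> h; apply: fsubset_leq_card; apply/fsubsetP => x; rewrite !inE.
by move=> /and3P[xY xp hx]; rewrite xp hx (h x xY xp hx).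
Qed.

Lemma in_coreset (Y : {fset pt}) eps p : 0 <= eps ->
  (p \in coreset k Y eps) = (p \in Y) && (k <= cnt Y p eps)%N.
Proof.
move=> e0; rewrite /coreset !inE /=; case pY: (p \in Y) => //=.
rewrite (cardfsD1 p) !inE pY /= dist_xx e0 /= add1n ltnS.
congr (_ <= _)%N; rewrite /cnt; congr (#|` _|); apply/fsetP => z.
rewrite !inE /=; case: (z \in Y); case: (z != p) => //=; by rewrite ?andbF ?andbT.
Qed.

Lemma in_compC (Y : {fset pt}) eps p q :
  q \in compC k Y eps p <-> q \in coreset k Y eps /\ reachC k Y eps p q.
Proof. by rewrite /compC in_sep; split => [/andP[-> /asboolP]|[-> /asboolP ->]]. Qed.

Lemma in_Dstar (Y : {fset pt}) eps C :
  C \in Dstar k Y eps <-> exists2 p, p \in coreset k Y eps & C = compC k Y eps p.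
Proof.
rewrite /Dstar; split; first by case/imfsetP => p /= h ->; exists p.
by move=> [p h ->]; apply/imfsetP; exists p.
Qed.

Lemma in_Ball (Y : {fset pt}) eps C y :
  y \in Ball Y eps C <-> y \in Y /\ exists c, c \in C /\ dist y c <= eps.
Proof. by rewrite /Ball in_sep; split => [/andP[-> /asboolP]|[-> /asboolP ->]]. Qed.

Lemma in_Fset (X Y : {fset pt}) eps p :
  p \in Fset k X Y eps <-> p \in Y /\
    ((exists C, C \in Dstar k Y eps /\ p \in C /\ thicken eps (bdry eps X C) (frakN R n) p)
     \/ p \in noise k Y eps).
Proof. by rewrite /Fset in_sep; split => [/andP[-> /asboolP]|[-> /asboolP ->]]. Qed.

Lemma Fset_sub (X Y : {fset pt}) eps : Fset k X Y eps `<=` Y.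
Proof. by apply/fsubsetP => p /in_Fset []. Qed.

Lemma Ball_sub (Y : {fset pt}) eps C : Ball Y eps C `<=` Y.
Proof. by apply/fsubsetP => p /in_Ball []. Qed.

Lemma Xs_sub (X : {fset pt}) e m : Xs k X e m `<=` X.
Proof. elim: m => [|m IH] /=; [exact: fsubset_refl|exact: fsubset_trans (Fset_sub _ _ _) IH]. Qed.

Lemma coreset_sub (Y : {fset pt}) eps : coreset k Y eps `<=` Y.
Proof. by apply/fsubsetP => p; rewrite /coreset in_sep => /andP[]. Qed.

Lemma reach_refl (Y : {fset pt}) eps p : reachC k Y eps p p.
Proof. by exists [::]. Qed.

Lemma reach_step (Y : {fset pt}) eps p x y : reachC k Y eps p x ->
  x \in coreset k Y eps -> y \in coreset k Y eps -> dist x y <= eps -> reachC k Y eps p y.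
Proof.
move=> [s [hs hl]] hx hy hd; exists (rcons s y); split; last by rewrite last_rcons.
by rewrite rcons_path hs hl hx hy hd.
Qed.

Lemma Dstar_core (Y : {fset pt}) eps C : C \in Dstar k Y eps -> C `<=` coreset k Y eps.
Proof. by move=> /in_Dstar[p _ ->]; apply/fsubsetP => q /in_compC[]. Qed.

Lemma Dstar_close (Y : {fset pt}) eps C c z : C \in Dstar k Y eps -> c \in C ->
  z \in coreset k Y eps -> dist c z <= eps -> z \in C.
Proof.
move=> /in_Dstar[p _ ->] /in_compC[hc hr] hz hd; apply/in_compC; split => //.
exact: reach_step hr hc hz hd.
Qed.

Lemma compC_self (Y : {fset pt}) eps p : p \in coreset k Y eps ->
  compC k Y eps p \in Dstar k Y eps /\ p \in compC k Y eps p.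
Proof.
move=> hp; split; first by apply/in_Dstar; exists p.
by apply/in_compC; split => //; exact: reach_refl.
Qed.

Lemma Dstar_rep (Y : {fset pt}) eps C : C \in Dstar k Y eps ->
  exists2 p, p \in C & forall x, x \in C -> exists s, path (fun x y =>
    [&& x \in coreset k Y eps, y \in coreset k Y eps & (dist x y <= eps)%R]) p s /\ last p s = x.
Proof.
move=> hC; have [p hp EC] := (in_Dstar _ _ _).1 hC.
exists p; first by rewrite EC; exact: (compC_self hp).2.
by move=> x; rewrite EC => /in_compC[_ h].
Qed.

Lemma rho_sym (Z : {fset pt}) p q : rho k Z p q = rho k Z q p.
Proof.
rewrite /rho eq_sym; case: eqP => // _.
case: (coredist k Z p) => [a|]; case: (coredist k Z q) => [b|] //.
by rewrite distC maxCA.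
Qed.

Lemma gW_Hg_sym (X : {fset pt}) e m p q : gW (Hg k X e m) p q = gW (Hg k X e m) q p.
Proof.
elim: m => [|m IH] //=; rewrite IH; congr omin.
elim: (enum_fset _) => [|C s IHs] //=; rewrite IHs; congr omin.
by rewrite (eq_sym q p) rho_sym; case: (p \in _); case: (q \in _).
Qed.

Lemma edge_Hg_sym (X : {fset pt}) e m v p q :
  edge (Hg k X e m) v p q -> edge (Hg k X e m) v q p.
Proof. by rewrite /edge gW_Hg_sym. Qed.

Lemma edge_Hg_mono (X : {fset pt}) e m m' v p q : (m <= m')%N ->
  edge (Hg k X e m) v p q -> edge (Hg k X e m') v p q.
Proof.
move=> hm h; elim: m' hm => [|m' IH]; first by rewrite leqn0 => /eqP <-.
rewrite leq_eqVlt => /orP[/eqP <- //|]; rewrite ltnS => /IH h'.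
by rewrite /= edge_union; right.
Qed.

Lemma conn_Hg_sym (X : {fset pt}) e m v p q :
  conn (edge (Hg k X e m) v) p q -> conn (edge (Hg k X e m) v) q p.
Proof. by apply: conn_sym => x y; apply: edge_Hg_sym. Qed.

Lemma comp_conn (X : {fset pt}) (e : nat -> R) m v C x y :
  0 <= e m.+1 -> e m.+1 <= v -> C \in Dstar k (Xs k X e m) (e m.+1) ->
  x \in C -> y \in C -> conn (edge (Hg k X e m.+1) v) x y.
Proof.
set Y := Xs k X e m; set eps := e m.+1.
move=> e0 ev hC hx hy.
have v0 : 0 <= v by exact: le_trans e0 ev.
have hcore := Dstar_core hC.
have Hedge : forall a b, a \in C -> b \in C -> dist a b <= eps -> conn (edge (Hg k X e m.+1) v) a b.
  move=> a b ha hb hab; case: (eqVneq a b) => [->|nab]; first exact: conn0.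
  apply: conn1; apply/Hg_edge => //; left; exists C => //.
  have -> : Num.min eps v = eps by apply/min_idPl.
  have inB : forall c, c \in C -> c \in Ball Y eps C.
    move=> c hc; apply/in_Ball; split; first exact: (fsubsetP (coreset_sub _ _)) (fsubsetP hcore _ hc).
    by exists c; rewrite dist_xx.
  have hcnt : forall c, c \in C -> (k <= cnt (Ball Y eps C) c eps)%N.
    move=> c hc; have := fsubsetP hcore _ hc; rewrite in_coreset // => /andP[_ h].
    apply: leq_trans h _; apply: cnt_incl => z zY _ hz; apply/in_Ball; split => //.
    by exists c; rewrite distC.
  by split; split => //; [exact: inB|exact: inB|exact: hcnt|exact: hcnt].
have [p hp hr] := Dstar_rep hC.
have Hp : forall z, z \in C -> conn (edge (Hg k X e m.+1) v) p z.
  move=> z /hr [s [hs hl]]; rewrite -hl; elim: s (p) hp hs {hl} => [|b s IH] a ha /=.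
    by move=> _; exact: conn0.
  move=> /andP[/and3P[h1 h2 h3] hs].
  have hb : b \in C by exact: Dstar_close hC ha h2 h3.
  exact: conn_trans (Hedge a b ha hb h3) (IH b hb hs).
exact: conn_trans (conn_Hg_sym (Hp x hx)) (Hp y hy).
Qed.
End Struct.

Section Geo.
Variables (R : realType) (n : nat) (eps : R).
Hypotheses (hn : (0 < n)%N) (he : 0 < eps).
Local Notation pt := (pt R n).
Local Notation dist := (@dist R n).
Local Notation s := (side n eps).

Lemma sqrtn_gt0 : 0 < Num.sqrt (n%:R : R).
Proof. by rewrite sqrtr_gt0 ltr0n. Qed.

Lemma s_gt0 : 0 < s.
Proof. by rewrite /side divr_gt0 // mulr_gt0 // sqrtn_gt0. Qed.

Lemma eps_s : eps = 2 * Num.sqrt (n%:R) * s.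
Proof.
rewrite /side mulrC divfK //; apply/lt0r_neq0; rewrite mulr_gt0 //; exact: sqrtn_gt0.
Qed.

Definition idx (x : pt) : 'I_n -> int := fun i => Num.floor (x ord0 i / s).

Lemma floor_bounds (y : R) : (Num.floor y)%:~R <= y /\ y < (Num.floor y + 1)%:~R.
Proof. by split; [exact: Num.Theory.floor_le|exact: Num.Theory.floorD1_gt]. Qed.

Lemma cube_idx x : cube eps (idx x) x.
Proof.
move=> i; have [h1 h2] := floor_bounds (x ord0 i / s).
have s0 := s_gt0.
rewrite /idx -!ler_pdivlMr //; rewrite h1 /=.
rewrite -ler_pdivrMr //; exact: ltW.
Qed.

Lemma cube_close (J : 'I_n -> int) u y i : cube eps J u -> cube eps J y ->
  `|u ord0 i - y ord0 i| <= s.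
Proof.
move=> /(_ i) /andP[h1 h2] /(_ i) /andP[h3 h4].
rewrite ler_norml; move: h2 h4; rewrite intrD mulrDl mul1r => h2 h4.
by apply/andP; split; lra.
Qed.

Definition clamp (a : int) (z : R) : R :=
  Num.min (Num.max z (a%:~R * s)) ((a + 1)%:~R * s).

Lemma clampP (a b M : int) (z : R) : `|a - b| <= M ->
  b%:~R * s <= z <= (b + 1)%:~R * s ->
  a%:~R * s <= clamp a z <= (a + 1)%:~R * s /\ `|z - clamp a z| <= M%:~R * s.
Proof.
move=> hab /andP[hz1 hz2]; have s0 := s_gt0.
move: hab; rewrite -(ler_int R) intr_norm intrB ler_norml => /andP[h1 h2].
move: hz2; rewrite intrD mulrDl mul1r => hz2.
rewrite /clamp intrD mulrDl mul1r.
have hsM1 : (a%:~R - b%:~R) * s <= M%:~R * s by rewrite ler_pM2r.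
have hsM2 : - M%:~R * s <= (a%:~R - b%:~R) * s by rewrite ler_pM2r.
split.
  apply/andP; split.
    by rewrite le_min le_max lexx orbT /=; lra.
  by rewrite ge_min lexx orbT.
case: (lerP z (a%:~R * s)) => hza.
  rewrite (min_idPl _); last by lra.
  rewrite ler_norml; apply/andP; split; lra.
case: (lerP z (a%:~R * s + s)) => hzb.
  rewrite subrr normr0.
  have hM : 0 <= M%:~R :> R by lra.
  by rewrite mulr_ge0 // ltW.
rewrite ler_norml; apply/andP; split; lra.
Qed.

Definition clampv (J : 'I_n -> int) (x : pt) : pt := \row_i clamp (J i) (x ord0 i).

Lemma near_cubeN (J K : 'I_n -> int) (M : int) x :
  (forall i, `|J i - K i| <= M) -> cube eps K x -> cubeN eps J M x.
Proof.
move=> hJK hx; exists (clampv J x); split.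
  by move=> i; rewrite /clampv mxE; have [] := clampP (hJK i) (hx i).
by move=> i; rewrite /clampv mxE; have [] := clampP (hJK i) (hx i).
Qed.

Definition bad (X C : {fset pt}) (K : 'I_n -> int) : Prop :=
  ~ meets eps (fun x => x \in C) K \/ exists x, [/\ x \in X, x \notin C & cube eps K x].

Lemma interior_bad (X C : {fset pt}) J K : interior_cube eps X C J ->
  (forall i, `|J i - K i| <= 1) -> bad X C K -> False.
Proof.
move=> [_ [h2 h3]] hJK [hK|[x [xX xC hx]]].
  by apply: hK; apply: h3 => x; apply: near_cubeN.
by move: xC; rewrite (h2 x xX (near_cubeN hJK hx)).
Qed.

Definition st (d : int) : int := if 0 < d then 1 else if d < 0 then -1 else 0.

Lemma st_le1 d : `|st d| <= 1.
Proof. by rewrite /st; case: (ltrP 0 d) => h1; case: (ltrP d 0) => h2. Qed.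

Lemma st_dec d (L : nat) : `|d| <= L.+1%:Z -> `|st d - d| <= L%:Z.
Proof. rewrite /st; case: (ltrP 0 d) => h1; case: (ltrP d 0) => h2 /=; lia. Qed.

Lemma walk (X C : {fset pt}) (L : nat) : forall J0 K,
  meets eps (fun x => x \in C) J0 -> (forall i, `|J0 i - K i| <= L%:Z) -> bad X C K ->
  exists B, boundary_cube eps X C B /\ forall i, `|B i - J0 i| <= (L.-1)%:Z.
Proof.
elim: L => [|L IH] J0 K hm hL hb.
  case: (pselect (interior_cube eps X C J0)) => hi.
    exfalso; apply: interior_bad hi _ hb => i; have := hL i; lia.
  by exists J0; split => // i; rewrite subrr.
case: (pselect (interior_cube eps X C J0)) => hi; last first.
  by exists J0; split => // i; rewrite subrr.
case: (pselect (forall i, `|J0 i - K i| <= 1)) => hadj.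
  by exfalso; apply: interior_bad hi hadj hb.
have [i0 hi0] : exists i, ~ (`|J0 i - K i| <= 1).
  by apply: contra_notP hadj => h i; case: (pselect (`|J0 i - K i| <= 1)) => // /(fun z => h (ex_intro _ i z)).
set J1 := fun i => J0 i + st (K i - J0 i).
have hJ1 : forall i, `|J0 i - J1 i| <= 1.
  by move=> i; rewrite /J1 opprD addrA subrr add0r normrN st_le1.
have hm1 : meets eps (fun x => x \in C) J1.
  case: hi => [_ [_ h3]]; apply: h3 => x; apply: near_cubeN => i.
  exact: hJ1.
have hL1 : forall i, `|J1 i - K i| <= L%:Z.
  move=> i; have := hL i; rewrite /J1 distrC => h.
  have -> : J0 i + st (K i - J0 i) - K i = st (K i - J0 i) - (K i - J0 i) by ring.
  by apply: st_dec; rewrite distrC.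
have [B [hB hBJ]] := IH J1 K hm1 hL1 hb.
exists B; split => // i.
have := hBJ i; have := hJ1 i; have := hL i0; move: hi0; lia.
Qed.

Lemma idx_diff (x y : pt) i :
  `|(idx x i - idx y i)%:~R : R| < `|x ord0 i - y ord0 i| / s + 1.
Proof.
have s0 := s_gt0.
have [hx1 hx2] := floor_bounds (x ord0 i / s).
have [hy1 hy2] := floor_bounds (y ord0 i / s).
rewrite /idx intrB; move: hx2 hy2; rewrite !intrD => hx2 hy2.
have -> : `|x ord0 i - y ord0 i| / s = `|x ord0 i / s - y ord0 i / s|.
  by rewrite -mulrBl normrM (@gtr0_norm _ s^-1) // invr_gt0.
rewrite ltr_norml; apply/andP; split;
  case: (lerP 0 (x ord0 i / s - y ord0 i / s)) => h;
  rewrite ?(ger0_norm h) ?(ltr0_norm h); lra.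
Qed.

Lemma idx_bound (x y : pt) (M : int) :
  (forall i, `|x ord0 i - y ord0 i| <= (M%:~R + 3%:R / 2%:R) * s) ->
  forall i, `|idx x i - idx y i| <= M + 2.
Proof.
move=> h i; have s0 := s_gt0.
have h1 := idx_diff x y i.
have h2 : `|x ord0 i - y ord0 i| / s <= M%:~R + 3%:R / 2%:R by rewrite ler_pdivrMr.
have h3' : `|(idx x i - idx y i)%:~R : R| < M%:~R + 3%:R by lra.
have h3 : `|(idx x i - idx y i)%:~R : R| < (M + 3)%:~R.
  by rewrite [(M + 3)%:~R]intrD.
by move: h3; rewrite -intr_norm ltr_int; lia.
Qed.

Lemma cube_between (a m : int) : a <= m <= a + 1 ->
  a%:~R * s <= m%:~R * s <= (a + 1)%:~R * s.
Proof.
move=> /andP[h1 h2]; have s0 := s_gt0.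
by rewrite !ler_pM2r // !ler_int h1 h2.
Qed.

Lemma thicken_of (X C : {fset pt}) B z (N : int) : 0 <= N ->
  boundary_cube eps X C B -> (forall i, `|B i - idx z i| <= N + 1) ->
  thicken eps (bdry eps X C) N z.
Proof.
move=> N0 hB hBz.
set j := fun i => B i + st (idx z i - B i).
have hjB : forall i, `|j i - B i| <= 1.
  move=> i; rewrite /j; have -> : B i + st (idx z i - B i) - B i = st (idx z i - B i) by ring.
  exact: st_le1.
set xp : pt := \row_i ((if j i <= B i then B i else j i)%:~R * s).
exists j; split.
  exists xp; split.
    exists B; split => // i; rewrite /xp mxE; apply: cube_between.
    by have := hjB i; case: ifP => h; lia.
  move=> i; rewrite /xp mxE; apply: cube_between.
  by have := hjB i; case: ifP => h; lia.
apply: near_cubeN (cube_idx z) => i.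
have [N' eN] : exists N' : nat, N = N'%:Z by exists `|N|%N; rewrite abszE ger0_norm.
rewrite eN in hBz *.
have -> : j i - idx z i = st (idx z i - B i) - (idx z i - B i).
  by rewrite /j /=; move: (st (idx z i - B i)) => t; move: (idx z i) (B i) => a b; ring.
apply: st_dec; have := hBz i; rewrite distrC; lia.
Qed.

Lemma sqrtn_ge1 : 1 <= Num.sqrt (n%:R : R).
Proof.
have h : (1 : R) <= n%:R by rewrite ler1n.
by move: (ler_wsqrtr h); rewrite sqrtr1.
Qed.

Lemma frakN_ge : 3%:R * Num.sqrt (n%:R : R) - 1 <= (frakN R n)%:~R.
Proof.
rewrite /frakN /frakn /frakm intrD.
have h1 := Num.Theory.ceil_ge (Num.sqrt (n%:R : R) - 1).
have h2 := Num.Theory.ceil_ge (2 * Num.sqrt (n%:R : R)).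
lra.
Qed.

Lemma frakN_ge0 : 0 <= frakN R n.
Proof.
have h := frakN_ge; have h1 := sqrtn_ge1.
have : (-1 : int)%:~R < (frakN R n)%:~R :> R by lra.
by rewrite ltr_int; lia.
Qed.

Lemma close_bound (a z : pt) :
  dist a z <= 3%:R * Num.sqrt (n%:R) * s + s / 2%:R ->
  forall i, `|idx a i - idx z i| <= frakN R n + 2.
Proof.
move=> h; apply: idx_bound => i.
have h1 := coord_le_dist a z i.
have h2 := frakN_ge; have s0 := s_gt0.
have h3 : (3%:R * Num.sqrt (n%:R) - 1) * s <= (frakN R n)%:~R * s by rewrite ler_pM2r.
lra.
Qed.

Lemma geo (X C : {fset pt}) w z : w \in X -> w \notin C -> z \in C ->
  (forall c, c \in C -> dist w z - eps <= dist w c) ->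
  thicken eps (bdry eps X C) (frakN R n) z.
Proof.
move=> wX wC zC hc.
have s0 := s_gt0; have r1 := sqrtn_ge1.
set r := Num.sqrt (n%:R : R).
have er : eps = 2 * r * s by exact: eps_s.
have N0 := frakN_ge0.
suff [K [hK hKb]] : exists K, bad X C K /\ forall i, `|idx z i - K i| <= frakN R n + 2.
  have [L eL] : exists L : nat, frakN R n + 2 = L%:Z.
    by exists (absz (frakN R n + 2)); rewrite abszE ger0_norm // addr_ge0.
  have hm : meets eps (fun x => x \in C) (idx z) by exists z; split => //; exact: cube_idx.
  have hKb' : forall i, `|idx z i - K i| <= L%:Z by move=> i; rewrite -eL; exact: hKb.
  have [B [hB hBz]] := walk hm hKb' hK.
  apply: (thicken_of N0 hB) => i; have := hBz i.
  have -> : (L.-1)%:Z = frakN R n + 1 by move: eL; lia.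
  by [].
set dz := dist w z.
set t := dz - eps - r * s - s / 2%:R.
case: (lerP t 0) => ht.
  exists (idx w); split; first by right; exists w; split => //; exact: cube_idx.
  move=> i; rewrite distrC; apply: close_bound.
  rewrite -/dz -/r; move: ht; rewrite /t; lra.
have ht' : 0 < dz - eps - r * s - s / 2%:R := ht.
have r1' : 1 <= r := sqrtn_ge1.
have rs0 : 0 < r * s by rewrite mulr_gt0 //; lra.
have dz0 : 0 < dz by lra.
set l := t / dz.
have l0 : 0 <= l by rewrite divr_ge0 // ltW.
have l1 : l <= 1 by rewrite ler_pdivrMr // mul1r /t; lra.
set y := seg w z l.
have dwy : dist w y = t by rewrite dist_seg1 // /l divfK // gt_eqF.
have dyz : dist y z = dz - t.
  rewrite dist_seg2 // -/dz mulrBl mul1r /l divfK // gt_eqF //.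
exists (idx y); split.
  left => -[u [uC hu]].
  have hyu : dist y u <= s * r.
    apply: dist_box; first exact: ltW.
    by move=> i; rewrite distrC; apply: cube_close hu (cube_idx y).
  have := hc u uC; have := dist_tri w y u; rewrite dwy -/dz.
  move=> h1 h2; have tE : t = dz - eps - r * s - s / 2%:R by [].
  lra.
move=> i; rewrite distrC; apply: close_bound; rewrite dyz.
have tE : t = dz - eps - r * s - s / 2%:R by [].
rewrite -/r; lra.
Qed.
End Geo.

Section Main.
Variables (R : realType) (n : nat) (k : nat) (X : {fset pt R n}) (e : nat -> R).
Hypotheses (hn : (0 < n)%N) (he0 : e 0%N = 0) (hinc : forall m, e m < e m.+1).
Local Notation pt := (pt R n).
Local Notation dist := (@dist R n).

Lemma e_ge0 m : 0 <= e m.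
Proof. elim: m => [|m IH]; [by rewrite he0|exact: le_trans IH (ltW (hinc m))]. Qed.

Lemma e_gt0 m : 0 < e m.+1.
Proof. exact: le_lt_trans (e_ge0 m) (hinc m). Qed.

Lemma e_mono a b : (a <= b)%N -> e a <= e b.
Proof.
elim: b => [|b IH]; first by rewrite leqn0 => /eqP ->.
rewrite leq_eqVlt => /orP[/eqP -> //|]; rewrite ltnS => /IH h.
exact: le_trans h (ltW (hinc b)).
Qed.

Lemma min_seq (s : seq pt) (f : pt -> R) c0 : c0 \in s ->
  exists2 c, c \in s & forall c', c' \in s -> f c <= f c'.
Proof.
elim: s c0 => [|x s IH] c0 //= _.
case: (pselect (exists y, y \in s)) => [[y ys]|hs].
  have [c cs hc] := IH y ys.
  case: (lerP (f x) (f c)) => h.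
    exists x; first by rewrite mem_head.
    by move=> c'; rewrite inE => /orP[/eqP ->//|/hc]; apply: le_trans.
  exists c; first by rewrite inE cs orbT.
  by move=> c'; rewrite inE => /orP[/eqP ->|/hc //]; exact: ltW.
exists x; first by rewrite mem_head.
move=> c'; rewrite inE => /orP[/eqP ->//|cs]; exfalso; apply: hs; by exists c'.
Qed.

Lemma min_exists (C : {fset pt}) (f : pt -> R) c0 : c0 \in C ->
  exists2 c, c \in C & forall c', c' \in C -> f c <= f c'.
Proof. exact: (@min_seq (enum_fset C) f c0). Qed.

Local Notation Y m := (Xs k X e m).
Local Notation HE m v := (edge (Hg k X e m) v).

Lemma Y_sub m : Y m `<=` X. Proof. exact: Xs_sub. Qed.
Lemma Y_succ m : Y m.+1 `<=` Y m. Proof. exact: Fset_sub. Qed.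

Lemma kept_noise m x : x \in Y m -> x \notin coreset k (Y m) (e m.+1) -> x \in Y m.+1.
Proof. by move=> hx hc; apply/in_Fset; split => //; right; rewrite /noise in_fsetD hc hx. Qed.

Lemma kept_geo m C w z : C \in Dstar k (Y m) (e m.+1) -> w \in Y m -> w \notin C ->
  z \in C -> (forall c, c \in C -> dist w z - e m.+1 <= dist w c) -> z \in Y m.+1.
Proof.
move=> hC hw wC zC hc; apply/in_Fset; split.
  exact: (fsubsetP (coreset_sub _ _ _)) (fsubsetP (Dstar_core hC) _ zC).
left; exists C; split => //; split => //.
have hwX : w \in X := fsubsetP (Y_sub m) _ hw.
exact: (geo hn (e_gt0 m) hwX wC zC hc).
Qed.

Lemma ball_kept m C w c z : C \in Dstar k (Y m) (e m.+1) -> w \in Y m -> w \notin C ->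
  c \in C -> (forall c', c' \in C -> dist w c <= dist w c') ->
  z \in Y m -> dist c z <= e m.+1 -> z \in Y m.+1.
Proof.
move=> hC hw wC cC hmin zY hcz.
case: (boolP (z \in coreset k (Y m) (e m.+1))) => hz; last exact: kept_noise.
have zC : z \in C by exact: Dstar_close hC cC hz hcz.
apply: (kept_geo hC hw wC zC) => c' c'C.
have := dist_tri w c z; have := hmin c' c'C; lra.
Qed.

Lemma half m v w x : e m.+1 <= v -> w \in Y m -> x \in coreset k (Y m) (e m.+1) ->
  w \notin compC k (Y m) (e m.+1) x ->
  exists x', [/\ x' \in Y m.+1, x' \in compC k (Y m) (e m.+1) x, dist w x' <= dist w x,
     (k <= cnt (Y m.+1) x' v)%N & conn (HE m.+1 v) x x'].
Proof.
move=> ev hw hx wC.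
have [hCD hxC] := compC_self hx.
set C := compC k (Y m) (e m.+1) x in hCD hxC wC *.
have [c cC hc] := min_exists (dist w) hxC.
have e0 := ltW (e_gt0 m).
have cY : c \in Y m := (fsubsetP (coreset_sub _ _ _)) _ (fsubsetP (Dstar_core hCD) _ cC).
have ccore := fsubsetP (Dstar_core hCD) _ cC.
exists c; split => //.
- by apply: (ball_kept hCD hw wC cC hc cY); rewrite dist_xx.
- exact: hc x hxC.
- apply: leq_trans (cnt_sub _ (fsubset_refl _) ev).
  move: ccore; rewrite in_coreset // => /andP[_ h]; apply: leq_trans h _.
  apply: cnt_incl => z zY _ hz; exact: ball_kept hCD hw wC cC hc zY hz.
- exact: comp_conn e0 ev hCD hxC cC.
Qed.

Lemma count_kept m v x : e m.+1 <= v -> x \in Y m ->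
  x \notin coreset k (Y m) (e m.+1) -> (k <= cnt (Y m) x v)%N -> (k <= cnt (Y m.+1) x v)%N.
Proof.
move=> ev hx hxn hcnt.
have e0 := ltW (e_gt0 m).
case: (pselect (exists C c, [/\ C \in Dstar k (Y m) (e m.+1), c \in C & dist x c + e m.+1 <= v])).
- move=> [C [c0 [hC c0C hc0]]].
  have [c cC hc] := min_exists (dist x) c0C.
  have xC : x \notin C.
    by apply/negP => /(fsubsetP (Dstar_core hC)); apply/negP.
  have cY : c \in Y m := (fsubsetP (coreset_sub _ _ _)) _ (fsubsetP (Dstar_core hC) _ cC).
  have ccore := fsubsetP (Dstar_core hC) _ cC.
  move: ccore; rewrite in_coreset // => /andP[_ hk].
  apply: leq_trans hk _.
  set A := [fset z in Y m | (z != c) && (dist c z <= e m.+1)].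
  set B := [fset z in Y m.+1 | (z != x) && (dist x z <= v)].
  have hsub : (A `\ x) `|` [fset c] `<=` B.
    apply/fsubsetP => z; rewrite in_fsetU in_fsetD1 in_fset1 => /orP[/andP[zx]|/eqP ->].
      rewrite in_sep => /and3P[zY _ hz]; rewrite in_sep zx /=.
      rewrite (ball_kept hC hx xC cC hc zY hz) /=.
      have := dist_tri x c z; have := hc c0 c0C; lra.
    rewrite in_sep; apply/and3P; split.
    + by apply: (ball_kept hC hx xC cC hc cY); rewrite dist_xx.
    + by apply/eqP => hcx; move: xC; rewrite -hcx cC.
    + have := hc c0 c0C; have := dist_ge0 c x; lra.
  apply: leq_trans (fsubset_leq_card hsub).
  rewrite /cnt -/A -/B fsetUC cardfsU1 (cardfsD1 x A).
  have -> : c \notin A `\ x by rewrite in_fsetD1 in_sep eqxx /= !andbF.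
  by case: (x \in A).
- move=> hno; apply: leq_trans hcnt _; apply: cnt_incl => z zY zx hz.
  case: (boolP (z \in coreset k (Y m) (e m.+1))) => hzc; last exact: kept_noise.
  have [hCD hzC] := compC_self hzc.
  have xC : x \notin compC k (Y m) (e m.+1) z.
    by apply/negP => /(fsubsetP (Dstar_core hCD)); apply/negP.
  apply: (kept_geo hCD hx xC hzC) => c' c'C.
  have : ~ (dist x c' + e m.+1 <= v).
    by move=> h; apply: hno; exists (compC k (Y m) (e m.+1) z), c'.
  move/negP; rewrite -ltNge => h; lra.
Qed.

Local Notation HEs m v := (fun x y => HE m.+1 v x y \/ E k (Y m.+1) v x y).

Lemma finish m v p q p' q' : 0 <= v ->
  conn (HE m.+1 v) p p' -> conn (HE m.+1 v) q' q ->
  p' \in Y m.+1 -> q' \in Y m.+1 -> (k <= cnt (Y m.+1) p' v)%N -> (k <= cnt (Y m.+1) q' v)%N ->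
  dist p' q' <= v -> conn (HEs m v) p q.
Proof.
move=> v0 h1 h2 hp hq cp cq hd.
have L : forall a b, conn (HE m.+1 v) a b -> conn (HEs m v) a b.
  by apply: conn_mono => a b h; apply: conn1; left.
apply: conn_trans (L _ _ h1) _; apply: conn_trans _ (L _ _ h2).
case: (eqVneq p' q') => [->|hne]; first exact: conn0.
by apply: conn1; right; split; split.
Qed.

Lemma step m v p q : e m.+1 <= v -> E k (Y m) v p q -> conn (HEs m v) p q.
Proof.
move=> ev [[hp hq hpq] [cp cq hd]].
have e0 := ltW (e_gt0 m).
have v0 : 0 <= v := le_trans e0 ev.
have L : forall a b, conn (HE m.+1 v) a b -> conn (HEs m v) a b.
  by apply: conn_mono => a b h; apply: conn1; left.
have notin_noise : forall x C, C \in Dstar k (Y m) (e m.+1) ->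
    x \notin coreset k (Y m) (e m.+1) -> x \notin C.
  by move=> x C hC hx; apply/negP => /(fsubsetP (Dstar_core hC)); apply/negP.
case: (boolP (p \in coreset k (Y m) (e m.+1))) => pc;
  case: (boolP (q \in coreset k (Y m) (e m.+1))) => qc.
- have [hCq hqC] := compC_self qc.
  case: (boolP (p \in compC k (Y m) (e m.+1) q)) => pCq.
    by apply: L; exact: comp_conn e0 ev hCq pCq hqC.
  have [q' [q'Y q'C dq' cq' cqq']] := half ev hp qc pCq.
  have [hCp hpC] := compC_self pc.
  case: (boolP (q' \in compC k (Y m) (e m.+1) p)) => q'Cp.
    apply: L; apply: conn_trans (comp_conn e0 ev hCp hpC q'Cp) _.
    exact: conn_Hg_sym cqq'.
  have q'Ym : q' \in Y m := fsubsetP (Y_succ m) _ q'Y.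
  have [p' [p'Y p'C dp' cp' cpp']] := half ev q'Ym pc q'Cp.
  apply: (finish v0 cpp' (conn_Hg_sym cqq') p'Y q'Y cp' cq').
  by rewrite distC; apply: le_trans dp' _; rewrite distC; apply: le_trans dq' hd.
- have [p' [p'Y p'C dp' cp' cpp']] := half ev hq pc (notin_noise _ _ (compC_self pc).1 qc).
  apply: (finish v0 cpp' (conn0 _ _) p'Y (kept_noise hq qc) cp' (count_kept ev hq qc cq)).
  by rewrite distC; apply: le_trans dp' _; rewrite distC.
- have [q' [q'Y q'C dq' cq' cqq']] := half ev hp qc (notin_noise _ _ (compC_self qc).1 pc).
  apply: (finish v0 (conn0 _ _) (conn_Hg_sym cqq') (kept_noise hp pc) q'Y
            (count_kept ev hp pc cp) cq').
  exact: le_trans dq' hd.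
- exact: (finish v0 (conn0 _ _) (conn0 _ _) (kept_noise hp pc) (kept_noise hq qc)
            (count_kept ev hp pc cp) (count_kept ev hq qc cq) hd).
Qed.

Lemma iter j v p q : e j <= v -> E k X v p q ->
  conn (fun x y => HE j v x y \/ E k (Y j) v x y) p q.
Proof.
elim: j => [|j IH] ev hE; first by apply: conn1; right.
have evj : e j <= v := le_trans (ltW (hinc j)) ev.
apply: conn_mono (IH evj hE) => x y [h|h].
  by apply: conn1; left; apply: edge_Hg_mono h.
exact: step ev h.
Qed.

Lemma final_edge m v x y : 0 <= v -> v <= e m.+1 -> E k (Y m) v x y -> HE m.+1 v x y.
Proof.
move=> v0 ve [[hx hy hxy] [cx cy hd]].
have e0 := ltW (e_gt0 m).
have xc : x \in coreset k (Y m) (e m.+1).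
  by rewrite in_coreset // hx /=; apply: leq_trans cx (cnt_sub _ (fsubset_refl _) ve).
have yc : y \in coreset k (Y m) (e m.+1).
  by rewrite in_coreset // hy /=; apply: leq_trans cy (cnt_sub _ (fsubset_refl _) ve).
have [hCD hxC] := compC_self xc.
set C := compC k (Y m) (e m.+1) x in hCD hxC *.
have hyC : y \in C := Dstar_close hCD hxC yc (le_trans hd ve).
apply/Hg_edge => //; left; exists C => //.
have -> : Num.min (e m.+1) v = v by apply/min_idPr.
have inB : forall c, c \in C -> c \in Ball (Y m) (e m.+1) C.
  move=> c hc; apply/in_Ball; split.
    exact: (fsubsetP (coreset_sub _ _ _)) (fsubsetP (Dstar_core hCD) _ hc).
  by exists c; split => //; rewrite dist_xx.
have hcnt : forall c, c \in C -> (cnt (Y m) c v <= cnt (Ball (Y m) (e m.+1) C) c v)%N.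
  move=> c hc; apply: cnt_incl => z zY _ hz; apply/in_Ball; split => //.
  by exists c; split => //; rewrite distC; apply: le_trans hz ve.
split; split => //; [exact: inB|exact: inB|exact: leq_trans cx (hcnt _ hxC)|
  exact: leq_trans cy (hcnt _ hyC)].
Qed.

Lemma Hpart j v p q : (0 < j)%N -> e j.-1 < v -> v <= e j -> E k X v p q ->
  conn (HE j v) p q.
Proof.
case: j => [//|m] _ /= hv ve hE.
have v0 : 0 <= v := le_trans (e_ge0 m) (ltW hv).
apply: conn_mono (iter (ltW hv) hE) => x y [h|h]; apply: conn1.
  exact: (edge_Hg_mono (leqnSn m) h).
exact: final_edge v0 ve h.
Qed.

Lemma E_sub (Z Z' : {fset pt}) v v' x y : Z' `<=` Z -> v' <= v -> E k Z' v' x y -> E k Z v x y.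
Proof.
move=> hZ hv [[hx hy hxy] [cx cy hd]]; split; split.
- exact: fsubsetP hZ _ hx.
- exact: fsubsetP hZ _ hy.
- exact: hxy.
- exact: leq_trans cx (cnt_sub _ hZ hv).
- exact: leq_trans cy (cnt_sub _ hZ hv).
- exact: le_trans hd hv.
Qed.

Lemma Hg_sound m v x y : 0 <= v -> HE m v x y -> E k X v x y.
Proof.
move=> v0; elim: m => [|m IH]; first by case.
move/Hg_edge => /(_ v0 (ltW (e_gt0 m))) [[C hC hE]|h]; last exact: IH.
apply: E_sub hE.
  exact: fsubset_trans (Ball_sub _ _ _) (Y_sub m).
by rewrite ge_min lexx orbT.
Qed.

Lemma find_level i a : 0 < a -> a <= e i ->
  exists j, [/\ (0 < j)%N, (j <= i)%N, e j.-1 < a & a <= e j].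
Proof.
move=> a0; elim: i => [|i IH] hai; first by move: a0; rewrite he0 in hai; lra.
case: (lerP a (e i)) => h.
  by have [j [h1 h2 h3 h4]] := IH h; exists j; split => //; apply: leq_trans h2 _.
by exists i.+1; split.
Qed.

Lemma Fpart i a x y : 0 <= a -> E k X a x y -> conn (edge (Fg k X e i) a) x y.
Proof.
move=> a0 hE.
case: (lerP (e i) a) => hia.
  apply: conn_mono (iter hia hE) => u w h; apply: conn1; apply/Fg_edge => //.
  by case: h; [right|left].
case: (lerP a 0) => ha.
  have [[_ _ hxy] [_ _ hd]] := hE; exfalso; move/negP: hxy; apply.
  by apply/eqP; apply: dist_le0; apply: le_trans hd ha.
have [j [j0 ji hj1 hj2]] := find_level ha (ltW hia).
apply: conn_mono (Hpart j0 hj1 hj2 hE) => u w h; apply: conn1; apply/Fg_edge => //.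
by right; apply: edge_Hg_mono ji h.
Qed.
End Main.

Local Close Scope fset_scope.

Theorem theorem5p10 (R : realType) (n : nat) (X : {fset pt R n}) (k : nat)
    (e : nat -> R) :
  (2 <= n)%N ->
  e 0%N = 0 ->
  (forall m : nat, e m < e m.+1) ->
  forall (i : nat) (nu alpha : R) (p q : pt R n),
    p \in X -> q \in X -> p != q ->
    ((0 < i)%N -> e i.-1 < nu -> nu <= e i ->
       (gconn (gtrunc nu (Hg k X e i)) p q <->
        gconn (gtrunc nu (gcomplete X (rho k X))) p q)) /\
    (0 <= alpha ->
       (gconn (gtrunc alpha (Fg k X e i)) p q <->
        gconn (gtrunc alpha (gcomplete X (rho k X))) p q)).
Proof.
move=> hn2 he0 hinc i nu alpha p q pX qX pq.
have hn : (0 < n)%N by apply: leq_trans hn2.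
split.
- move=> i0 hnu hnue.
  have nu0 : 0 <= nu := le_trans (e_ge0 he0 hinc i.-1) (ltW hnu).
  rewrite !gconnE /=; split => -[_ _ hc]; split => //.
  + apply: conn_mono hc => x y h; apply: conn1; apply/edge_rho => //.
    exact: (@Hg_sound R n k X e he0 hinc i nu x y nu0 h).
  + exact: fsubsetP (gV_Hg _ _ _ _) _ pX.
  + exact: fsubsetP (gV_Hg _ _ _ _) _ qX.
  + apply: conn_mono hc => x y /(edge_rho _ _ _ _ nu0) h.
    exact: (@Hpart R n k X e hn he0 hinc i nu x y i0 hnu hnue h).
- move=> a0; rewrite !gconnE /=; split => -[_ _ hc]; split => //.
  + apply: conn_mono hc => x y /(Fg_edge _ _ _ _ _ _ a0) h; apply: conn1; apply/edge_rho => //.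
    case: h => h; last exact: (@Hg_sound R n k X e he0 hinc i alpha x y a0 h).
    by apply: E_sub h => //; exact: Xs_sub.
  + by rewrite /Fg /= in_fsetU (fsubsetP (gV_Hg _ _ _ _) _ pX) orbT.
  + by rewrite /Fg /= in_fsetU (fsubsetP (gV_Hg _ _ _ _) _ qX) orbT.
  + apply: conn_mono hc => x y /(edge_rho _ _ _ _ a0) h.
    exact: (@Fpart R n k X e hn he0 hinc i alpha x y a0 h).
Qed.
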